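(* Every smooth irreducible genuine $k$-representation of $\widetilde T$ is finite-dimensional.
   Context: Let $p$ be an odd prime and $k$ an algebraically closed field of characteristic $p$. Let $G=\mathrm{GL}_2(\mathbb{Q}_p)$, $v$ the $p$-adic valuation, $\mu_2=\{\pm1\}$, $\omega\colon\mathbb{Q}_p^\times\to\mathbb{F}_p^\times$, $x\mapsto (xp^{-v(x)}\bmod p)$, Hilbert symbol $(a,b)=\omega\big((-1)^{v(a)v(b)}b^{v(a)}/a^{v(b)}\big)^{(p-1)/2}$. For $g=\begin{pmatrix}a&b\\c&d\end{pmatrix}$ put $\mathfrak c(g)=c$ if $c\neq0$, $\mathfrak c(g)=d$ if $c=0$. The metaplectic cover $\widetilde G$ is $G\times\mu_2$ with $(g_1,\zeta_1)(g_2,\zeta_2)=(g_1g_2,\zeta_1\zeta_2\sigma(g_1,g_2))$, $\sigma(g_1,g_2)=\big(\mathfrak c(g_1g_2)/\mathfrak c(g_1),\ \det(g_1)\mathfrak c(g_1g_2)/\mathfrak c(g_2)\big)$. $T$ is the diagonal torus and $\widetilde T$ its preimage in $\widetilde G$. $\iota\colon\mu_2\to k^\times$ is the nontrivial character; genuine means $\mu_2$ acts through $\iota$. *)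

(* Defs.v *)
From HB Require Import structures.
From mathcomp Require Import all_boot all_order all_algebra.
Set Implicit Arguments. Unset Strict Implicit. Unset Printing Implicit Defensive.
Import Order.TTheory GRing.Theory Num.Theory.

(** * Z_p^x as the inverse limit of (Z/p^(n+1))^x.
    An element is the sequence of its residues  zf n  in [0, p^(n+1)),
    compatible under reduction, with unit residue mod p. *)
Record Zpx (p : nat) := MkZpx {
  zf : nat -> nat;
  zf_norm : forall n, zf n %% p ^ n.+1 = zf n;
  zf_compat : forall n, zf n.+1 %% p ^ n.+1 = zf n;
  zf_unit : coprime (zf 0) p }.

Section ZpxOps.
Variable p : nat.

Lemma Zpx_mul_norm (x y : Zpx p) n :
  (zf x n * zf y n %% p ^ n.+1) %% p ^ n.+1 = zf x n * zf y n %% p ^ n.+1.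
Proof. by rewrite modn_mod. Qed.

Lemma Zpx_mul_compat (x y : Zpx p) n :
  (zf x n.+1 * zf y n.+1 %% p ^ n.+2) %% p ^ n.+1 = zf x n * zf y n %% p ^ n.+1.
Proof.
rewrite modn_dvdm; last by rewrite dvdn_exp2l.
by rewrite -modnMm !zf_compat.
Qed.

Lemma Zpx_mul_unit (x y : Zpx p) : coprime (zf x 0 * zf y 0 %% p ^ 1) p.
Proof. by rewrite expn1 coprime_modl coprimeMl !zf_unit. Qed.

Definition Zpx_mul (x y : Zpx p) : Zpx p :=
  MkZpx (Zpx_mul_norm x y) (Zpx_mul_compat x y) (Zpx_mul_unit x y).

Lemma Zpx_one_norm n : (1 %% p ^ n.+1) %% p ^ n.+1 = 1 %% p ^ n.+1.
Proof. by rewrite modn_mod. Qed.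

Lemma Zpx_one_compat n : (1 %% p ^ n.+2) %% p ^ n.+1 = 1 %% p ^ n.+1.
Proof. by rewrite modn_dvdm // dvdn_exp2l. Qed.

Lemma Zpx_one_unit : coprime (1 %% p ^ 1) p.
Proof. by rewrite expn1 coprime_modl coprime1n. Qed.

Definition Zpx_one : Zpx p :=
  MkZpx (fun n => Zpx_one_norm n) (fun n => Zpx_one_compat n) Zpx_one_unit.

(** * Q_p^x = p^Z x Z_p^x : the pair (n, u) stands for p^n u. *)
Definition Qpx := (int * Zpx p)%type.

Definition Qpx_mul (x y : Qpx) : Qpx := (x.1 + y.1, Zpx_mul x.2 y.2)%R.
Definition Qpx_one : Qpx := (0%R, Zpx_one).

Definition vp (x : Qpx) : int := x.1.

(** omega(x) = x p^{-v(x)} mod p, in F_p^x *)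
Local Open Scope ring_scope.
Definition omega (x : Qpx) : 'F_p := (zf x.2 0)%:R.

Definition hilbert_F (a b : Qpx) : 'F_p :=
  ((-1) ^ (vp a * vp b) * omega b ^ (vp a) / omega a ^ (vp b)) ^+ ((p - 1) %/ 2)%N.

(** mu_2 = {+1,-1} encoded as bool, with true = -1 and product = xor. *)
Definition hilbert (a b : Qpx) : bool := hilbert_F a b == -1.

(** Diagonal torus T: (a, d) stands for diag(a, d). *)
Definition T := (Qpx * Qpx)%type.
Definition T_mul (s t : T) : T := (Qpx_mul s.1 t.1, Qpx_mul s.2 t.2).

(** Cocycle restricted to T: for g1 = diag(a1,d1), g2 = diag(a2,d2) we have
    c(g1) = d1, c(g2) = d2, c(g1 g2) = d1 d2, det g1 = a1 d1, hence
    sigma(g1,g2) = ( d1 d2 / d1 , a1 d1 * d1 d2 / d2 ) = ( d2 , a1 d1 d1 ). *)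
Definition sigmaT (s t : T) : bool :=
  hilbert t.2 (Qpx_mul (Qpx_mul s.1 s.2) s.2).

Definition Ttilde := (T * bool)%type.
Definition Tt_mul (x y : Ttilde) : Ttilde :=
  (T_mul x.1 y.1, xorb (xorb x.2 y.2) (sigmaT x.1 y.1)).
Definition Tt_one : Ttilde := ((Qpx_one, Qpx_one), false).
Definition Tt_mone : Ttilde := ((Qpx_one, Qpx_one), true).

(** x lies in 1 + p^(m+1) Z_p *)
Definition in_K (m : nat) (x : Qpx) : bool :=
  (vp x == 0) && (zf x.2 m == (1 %% p ^ m.+1)%N).

End ZpxOps.

Section Reps.
Local Open Scope ring_scope.
Variables (p : nat) (k : fieldType) (V : lmodType k).
Variable pi : Ttilde p -> {linear V -> V}.

Definition is_rep : Prop :=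
  (forall v, pi (Tt_one p) v = v) /\
  (forall g h v, pi (Tt_mul g h) v = pi g (pi h v)).

Definition genuine : Prop := forall v, pi (Tt_mone p) v = - v.

(** smooth: every vector is fixed by an open subgroup of T~; the subgroups
    (1 + p^(m+1) Z_p)^2 x {1} form a neighbourhood basis of 1 in T~. *)
Definition smooth : Prop :=
  forall v : V, exists m : nat, forall t : T p,
    in_K m t.1 -> in_K m t.2 -> pi (t, false) v = v.

Definition invariant_subspace (S : V -> Prop) : Prop :=
  [/\ S 0, (forall u w, S u -> S w -> S (u + w)),
      (forall (a : k) u, S u -> S (a *: u)) &
      (forall g u, S u -> S (pi g u))].

Definition irreducible : Prop :=
  (exists v : V, v != 0) /\
  forall S, invariant_subspace S -> (forall v, S v) \/ (forall v, S v -> v = 0).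

End Reps.

Definition finite_dim (k : fieldType) (V : lmodType k) : Prop :=
  exists (n : nat) (b : 'I_n -> V), forall v : V,
    exists c : 'I_n -> k, v = (\sum_(i < n) c i *: b i)%R.

(* Main.v *)
Require Import Defs.
From Stdlib Require Import Classical ProofIrrelevance FunctionalExtensionality.
From HB Require Import structures.
From mathcomp Require Import all_boot all_order all_algebra.
From mathcomp Require Import all_field.
From mathcomp Require Import ring.

Module PA.
Set Implicit Arguments. Unset Strict Implicit. Unset Printing Implicit Defensive.
Import Order.TTheory GRing.Theory Num.Theory.
Local Open Scope ring_scope.

Section Act.
Variables (k : fieldType) (V : lmodType k).

Definition lin (f : V -> V) :=
  (forall u w, f (u + w) = f u + f w) /\ (forall (c : k) u, f (c *: u) = c *: f u).

Lemma lin0 f : lin f -> f 0 = 0.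
Proof. by move=> [_ H]; have := H 0 0; rewrite !scale0r. Qed.

Lemma linN f u : lin f -> f (- u) = - f u.
Proof. by move=> [_ H]; rewrite -scaleN1r H scaleN1r. Qed.

Lemma lin_sum f (I : Type) (s : seq I) (P : pred I) (F : I -> V) : lin f ->
  f (\sum_(i <- s | P i) F i) = \sum_(i <- s | P i) f (F i).
Proof.
move=> hf; elim: s => [|a s IH]; first by rewrite !big_nil lin0.
rewrite !big_cons; case: (P a) => //; by rewrite hf.1 IH.
Qed.

Lemma lin_iter f n : lin f -> lin (iter n f).
Proof.
move=> hf; elim: n => [|n [IH1 IH2]]; first by split.
by split=> [u w|c u] /=; rewrite ?IH1 ?IH2 ?hf.1 ?hf.2.
Qed.

Record is_act (R : nzRingType) (A : R -> V -> V) := {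
  act_lin : forall r, lin (A r);
  act_add : forall r s v, A (r + s) v = A r v + A s v;
  act_mul : forall r s v, A (r * s) v = A r (A s v);
  act_one : forall v, A 1 v = v }.

Section Gen.
Variables (R : nzRingType) (A : R -> V -> V) (hA : is_act A).

Lemma act0 v : A 0 v = 0.
Proof.
have h := act_add hA 0 0 v; rewrite addr0 in h.
by apply: (addrI (A 0 v)); rewrite addr0 -h.
Qed.

Lemma act0v r : A r 0 = 0.
Proof. exact: lin0 (act_lin hA r). Qed.

Variable T : V -> V.
Hypothesis linT : lin T.
Hypothesis TA : forall r v, T (A r v) = A r (T v).

Definition pev (q : {poly R}) (v : V) : V :=
  \sum_(j < size q) iter j T (A q`_j v).

Lemma iterT0 j : iter j T 0 = 0.
Proof. exact: lin0 (lin_iter j linT). Qed.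

Lemma iterTA j r v : iter j T (A r v) = A r (iter j T v).
Proof. by elim: j => //= j ->; rewrite TA. Qed.

Lemma pev_bound (q : {poly R}) n v : (size q <= n)%N ->
  pev q v = \sum_(j < n) iter j T (A q`_j v).
Proof.
move=> hn; rewrite /pev -!(big_mkord xpredT (fun j => iter j T (A q`_j v))).
rewrite (big_cat_nat (leq0n _) hn) /= [X in _ = _ + X]big1_seq ?addr0 //.
move=> j /andP[_]; rewrite mem_index_iota => /andP[hj _].
have -> : q`_j = 0 by rewrite nth_default.
by rewrite act0 iterT0.
Qed.

Lemma pev_lin (q : {poly R}) : lin (pev q).
Proof.
split=> [u w|c u]; rewrite /pev.
  by rewrite -big_split; apply: eq_bigr => j _; rewrite (act_lin hA _).1 (lin_iter _ linT).1.
by rewrite scaler_sumr; apply: eq_bigr => j _; rewrite (act_lin hA _).2 (lin_iter _ linT).2.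
Qed.

Lemma pev_add (q1 q2 : {poly R}) v : pev (q1 + q2) v = pev q1 v + pev q2 v.
Proof.
set n := maxn (size q1) (size q2).
rewrite !(@pev_bound _ n) ?size_polyD ?leq_maxl ?leq_maxr // -big_split.
by apply: eq_bigr => j _; rewrite coefD act_add // (lin_iter _ linT).1.
Qed.

Lemma pev0 v : pev 0 v = 0.
Proof. by rewrite /pev size_poly0 big_ord0. Qed.

Lemma pev_mulX (s : {poly R}) v : pev (s * 'X) v = T (pev s v).
Proof.
rewrite (@pev_bound _ (size s).+1); last first.
  by apply: leq_trans (size_polyMleq _ _) _; rewrite size_polyX addn2.
rewrite big_ord_recl coefMX eqxx act0 iterT0 add0r /pev (lin_sum _ _ _ linT).
by apply: eq_bigr => j _; rewrite coefMX /=.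
Qed.

Lemma pev_CM (c : R) (s : {poly R}) v : pev (c%:P * s) v = A c (pev s v).
Proof.
rewrite (@pev_bound _ (size s)); last by rewrite mul_polyC size_scale_leq.
rewrite /pev (lin_sum _ _ _ (act_lin hA c)).
by apply: eq_bigr => j _; rewrite coefCM act_mul // iterTA.
Qed.

Lemma pev_C (c : R) v : pev c%:P v = A c v.
Proof. by rewrite (@pev_bound _ 1) ?size_polyC_leq1 // big_ord1 coefC. Qed.

Lemma pev_mul (q1 q2 : {poly R}) v : pev (q1 * q2) v = pev q1 (pev q2 v).
Proof.
elim/poly_ind: q1 => [|p c IH]; first by rewrite mul0r !pev0.
rewrite mulrDl -mulrA -(commr_polyX q2) mulrA pev_add pev_mulX IH pev_CM.
by rewrite pev_add pev_mulX pev_C.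
Qed.

Lemma pev_one v : pev 1 v = v.
Proof. by rewrite -polyC1 pev_C act_one. Qed.

Lemma pev_X v : pev 'X v = T v.
Proof. by rewrite -['X]mul1r pev_mulX pev_one. Qed.

Lemma pev_act : is_act pev.
Proof.
split; [exact: pev_lin | exact: pev_add | exact: pev_mul | exact: pev_one].
Qed.

Lemma pev_comm (S : V -> V) : lin S -> (forall v, S (T v) = T (S v)) ->
  (forall r v, S (A r v) = A r (S v)) -> forall q v, S (pev q v) = pev q (S v).
Proof.
move=> hS ST SA q v; rewrite /pev (lin_sum _ _ _ hS).
apply: eq_bigr => j _; rewrite -SA; move: (A q`_j v) => w.
by elim: (nat_of_ord j) => //= n IH; rewrite ST IH.
Qed.

End Gen.

Section LemG.
Variables (R : idomainType) (A : R -> V -> V) (hA : is_act A).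

Lemma actN r v : A (- r) v = - A r v.
Proof.
apply/eqP; rewrite -subr_eq0 opprK -act_add // addNr.
by rewrite (act0 hA).
Qed.

Lemma actB r s v : A (r - s) v = A r v - A s v.
Proof. by rewrite act_add // actN. Qed.

Lemma actC r s v : A r (A s v) = A s (A r v).
Proof. by rewrite -!act_mul // mulrC. Qed.

Hypothesis bij : forall r, r != 0 ->
  (forall u, A r u = 0 -> u = 0) /\ (forall u, exists w, A r w = u).
Hypothesis Hh : forall g : R, g != 0 ->
  exists2 h, h != 0 & forall b P, g ^+ b != h * P.
Variables (I : eqType) (w : I -> V).
Hypothesis v0 : exists v : V, v != 0.

Definition spanned (s : seq I) (g : R) := forall v, exists b (P : I -> R),
  A (g ^+ b) v = \sum_(i <- s) A (P i) (w i).

Lemma lemG n : forall s g, (size s <= n)%N -> uniq s -> g != 0 -> spanned s g -> False.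
Proof.
elim: n => [|n IH] s g.
  rewrite leqn0 => /nilP -> _ g0 hs.
  case: v0 => v; have [b [P]] := hs v; rewrite big_nil => h.
  by rewrite ((bij (expf_neq0 b g0)).1 v h) eqxx.
move=> hsz us g0 hs.
case: s hsz us hs => [|j s'] hsz us hs.
  case: v0 => v; have [b [P]] := hs v; rewrite big_nil => h.
  by rewrite ((bij (expf_neq0 b g0)).1 v h) eqxx.
set s := j :: s' in hsz us hs *.
case: (classic (exists P0 : I -> R,
   \sum_(i <- s) A (P0 i) (w i) = 0 /\ exists2 i0, i0 \in s & P0 i0 != 0)) => [[P0 [hP0 [i0 i0s q0]]]|indep].
  set q := P0 i0.
  apply: (IH (rem i0 s) (g * q)).
  - by rewrite size_rem // -ltnS (ltn_predK (n:=0)) // (@leq_trans 1) //; case: (s) i0s.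
  - exact: rem_uniq.
  - by rewrite mulf_neq0.
  move=> v; have [b [P hP]] := hs v.
  exists b.+1, (fun i => g * q ^+ b * (q * P i - P i0 * P0 i)).
  rewrite rem_filter // big_filter.
  have -> : (g * q) ^+ b.+1 = g * q ^+ b * (q * g ^+ b).
    by rewrite exprS exprMn; ring.
  rewrite [A (g * q ^+ b * _) v]act_mul // [A (q * g ^+ b) v]act_mul // hP (bigD1_seq i0) //=.
  have hq : A q (w i0) = - \sum_(i <- s | i != i0) A (P0 i) (w i).
    apply/eqP; rewrite -addr_eq0 -(bigD1_seq i0 i0s us) /=; exact/eqP.
  rewrite (act_lin hA q).1 actC hq (linN _ (act_lin hA _)) (lin_sum _ _ _ (act_lin hA _)).
  rewrite (lin_sum _ _ _ (act_lin hA _)) -sumrN -big_split (lin_sum _ _ _ (act_lin hA _)).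
  apply: eq_bigr => i _.
  rewrite [RHS]act_mul // actB -!act_mul // addrC //.
have [h h0 hh] := Hh g0.
have [u hu] := (bij h0).2 (w j).
have [b [P hP]] := hs u.
apply: indep; exists (fun i => h * P i - (if i == j then g ^+ b else 0)); split; last first.
  exists j; first by rewrite mem_head.
  rewrite eqxx subr_eq0; apply/eqP => e.
  by move: (hh b (P j)); rewrite e eqxx.
under eq_bigr do rewrite actB.
rewrite sumrB.
have -> : \sum_(i <- s) A (h * P i) (w i) = A (g ^+ b) (w j).
  under eq_bigr do rewrite act_mul //.
  by rewrite -(lin_sum _ _ _ (act_lin hA _)) -hP actC hu.
rewrite big_cons eqxx big1_seq ?addr0 ?subrr // => i /andP[_ hi].
have : i != j by apply: contraTneq hi => ->; move: us => /= /andP[].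
by move/negPf => ->; rewrite (act0 hA).
Qed.
End LemG.

Section WG.
Variables (R : comNzRingType) (A : R -> V -> V) (hA : is_act A).
Variables (I : eqType) (w : I -> V) (s : seq I).

Lemma actC' r t v : A r (A t v) = A t (A r v).
Proof. by rewrite -!act_mul // mulrC. Qed.

Definition inW v := exists P : I -> R, v = \sum_(i <- s) A (P i) (w i).

Lemma inW0 : inW 0.
Proof. by exists (fun _ => 0); rewrite big1 // => i _; rewrite (act0 hA). Qed.

Lemma inW_add u v : inW u -> inW v -> inW (u + v).
Proof.
move=> [P ->] [Q ->]; exists (fun i => P i + Q i).
by rewrite -big_split; apply: eq_bigr => i _; rewrite act_add.
Qed.

Lemma inW_act r u : inW u -> inW (A r u).
Proof.
move=> [P ->]; exists (fun i => r * P i).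
by rewrite (lin_sum _ _ _ (act_lin hA r)); apply: eq_bigr => i _; rewrite act_mul.
Qed.

Lemma inW_delta i : uniq s -> i \in s -> inW (w i).
Proof.
move=> us iS; exists (fun j => if j == i then 1 else 0).
rewrite (bigD1_seq i) //= eqxx act_one // big1 ?addr0 // => j /negPf ->.
by rewrite (act0 hA).
Qed.

Lemma inW_sum (J : eqType) (l : seq J) (F : J -> V) :
  (forall x, x \in l -> inW (F x)) -> inW (\sum_(x <- l) F x).
Proof.
elim: l => [|a l IH] h; first by rewrite big_nil; exact: inW0.
rewrite big_cons; apply: inW_add; first by apply: h; rewrite mem_head.
by apply: IH => x hx; apply: h; rewrite inE hx orbT.
Qed.


Definition Good g v := exists b, inW (A (g ^+ b) v).

Lemma Good_inW g v : inW v -> Good g v.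
Proof. by move=> h; exists 0%N; rewrite expr0 act_one. Qed.

Lemma Good_add g u v : Good g u -> Good g v -> Good g (u + v).
Proof.
move=> [b1 h1] [b2 h2]; exists (b1 + b2)%N.
rewrite (act_lin hA _).1 exprD; apply: inW_add.
  by rewrite mulrC act_mul //; apply: inW_act.
by rewrite act_mul //; apply: inW_act.
Qed.

Lemma Good_act g r v : Good g v -> Good g (A r v).
Proof. by move=> [b h]; exists b; rewrite actC'; apply: inW_act. Qed.

Lemma Good_back g r u v : A g u = A r v -> Good g v -> Good g u.
Proof.
move=> e [b h]; exists b.+1; rewrite exprS mulrC act_mul // e actC'.
exact: inW_act.
Qed.

End WG.
End Act.

End PA.
Import PA.

Module PN.
Set Implicit Arguments. Unset Strict Implicit. Unset Printing Implicit Defensive.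
Import Order.TTheory GRing.Theory Num.Theory.
Local Open Scope ring_scope.

Lemma exists_nonroot (k : closedFieldType) (q : {poly k}) : q != 0 -> exists c, q.[c] != 0.
Proof.
move=> q0; apply: NNPP => hn.
have hr : forall c, q.[c] = 0 by move=> c; apply: NNPP => h; apply: hn; exists c; exact/eqP.
have : size ('X * q + 1) != 1%N.
  rewrite size_polyDl mulrC size_mulX //; last by rewrite size_poly1 ltnS size_poly_gt0.
  by rewrite eqSS size_poly_eq0.
move/closed_rootP => [c]; rewrite /root !hornerE hr mulr0 add0r.
by rewrite oner_eq0.
Qed.

Section NS.
Variables (k : closedFieldType) (V : lmodType k).
Variables X Xi Y Yi : V -> V.
Hypotheses (linX : lin X) (linY : lin Y) (linXi : lin Xi) (linYi : lin Yi).
Hypotheses (XXi : forall v, X (Xi v) = v) (XiX : forall v, Xi (X v) = v).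
Hypotheses (YYi : forall v, Y (Yi v) = v) (YiY : forall v, Yi (Y v) = v).
Hypothesis XY : forall v, X (Y v) = Y (X v).
Variables (G : Type) (act : G -> V -> V).
Hypothesis lin_act : forall g, lin (act g).
Hypothesis Xact : forall g v, X (act g v) = act g (X v).
Hypothesis Yact : forall g v, Y (act g v) = act g (Y v).
Hypothesis Schur : forall P : V -> V, lin P -> (forall g v, P (act g v) = act g (P v)) ->
  (forall v, P v = 0) \/ ((forall u, P u = 0 -> u = 0) /\ (forall u, exists w, P w = u)).
Variables (I : eqType) (w : I -> V) (s : seq I).

Inductive Span : V -> Prop :=
| Sp_base i : i \in s -> Span (w i)
| Sp0 : Span 0
| SpD u v : Span u -> Span v -> Span (u + v)
| SpZ (c : k) u : Span u -> Span (c *: u)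
| SpX u : Span u -> Span (X u)
| SpXi u : Span u -> Span (Xi u)
| SpY u : Span u -> Span (Y u)
| SpYi u : Span u -> Span (Yi u).

Hypothesis hspan : forall v, Span v.
Hypothesis v0 : exists v : V, v != 0.

Definition A0 (c : k) (v : V) := c *: v.
Lemma A0_act : is_act A0.
Proof.
split=> [r|r t v|r t v|v]; rewrite /A0.
- by split=> [u u'|c u]; rewrite ?scalerDr // !scalerA mulrC.
- exact: scalerDl.
- by rewrite scalerA.
- exact: scale1r.
Qed.

Definition evX := pev A0 X.
Lemma XA0 (r : k) v : X (A0 r v) = A0 r (X v).
Proof. exact: linX.2. Qed.
Lemma evX_act : is_act evX.
Proof. exact: (@pev_act _ _ _ A0 A0_act X linX XA0). Qed.

Lemma comm_evX (S : V -> V) : lin S -> (forall v, S (X v) = X (S v)) ->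
  forall q v, S (evX q v) = evX q (S v).
Proof.
move=> hS SX; apply: pev_comm => //.
by move=> r v; rewrite /A0 hS.2.
Qed.

Lemma YevX q v : Y (evX q v) = evX q (Y v).
Proof. by apply: comm_evX => // u; rewrite XY. Qed.

Definition ev2 := pev evX Y.
Lemma ev2_act : is_act ev2.
Proof. exact: (@pev_act _ _ _ evX evX_act Y linY YevX). Qed.

Lemma comm_ev2 (S : V -> V) : lin S -> (forall v, S (X v) = X (S v)) ->
  (forall v, S (Y v) = Y (S v)) -> forall q v, S (ev2 q v) = ev2 q (S v).
Proof.
move=> hS SX SY; apply: pev_comm => //.
exact: comm_evX.
Qed.

Lemma Schur2 Q : (forall v, ev2 Q v = 0) \/
  ((forall u, ev2 Q u = 0 -> u = 0) /\ (forall u, exists w, ev2 Q w = u)).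
Proof.
apply: Schur; first exact: (act_lin ev2_act).
by move=> g v; symmetry; apply: comm_ev2 => // u; rewrite ?Xact ?Yact.
Qed.

Lemma ev2C q v : ev2 q%:P v = evX q v.
Proof. by rewrite /ev2 (pev_C evX_act linY). Qed.

Lemma SchurX q : (forall v, evX q v = 0) \/
  ((forall u, evX q u = 0 -> u = 0) /\ (forall u, exists w, evX q w = u)).
Proof.
case: (Schur2 q%:P) => [h|[h1 h2]]; [left => v; by rewrite -ev2C h|right; split].
  by move=> u hu; apply: h1; rewrite ev2C.
by move=> u; have [w' hw] := h2 u; exists w'; rewrite -ev2C.
Qed.


Lemma evX_X v : evX 'X v = X v.
Proof. by rewrite /evX (pev_X A0_act linX). Qed.

Lemma evX_C c v : evX c%:P v = c *: v.
Proof. by rewrite /evX (pev_C A0_act linX). Qed.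

Lemma evX_XsubC a v : evX ('X - a%:P) v = X v - a *: v.
Proof. by rewrite (actB evX_act) evX_X evX_C. Qed.

Lemma v0_contra (c : k) : c != 0 -> (forall v : V, c *: v = 0) -> False.
Proof.
move=> c0 h; case: v0 => v; have := h v; move/eqP; rewrite scaler_eq0 (negPf c0) /=.
by move=> ->.
Qed.

Lemma alg_scalar n : forall q : {poly k}, (size q <= n)%N -> q != 0 ->
  (forall v, evX q v = 0) -> exists a, forall v, X v = a *: v.
Proof.
elim: n => [|n IH] q hs q0 hq.
  by move: hs; rewrite leqn0 size_poly_eq0 (negPf q0).
case: (eqVneq (size q) 1%N) => [s1|s1].
  have e := size1_polyC (eq_leq s1).
  exfalso; apply: (@v0_contra q`_0).
    by apply: contraNneq q0 => h; rewrite e h.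
  by move=> v; rewrite -evX_C -e hq.
have [a /factor_theorem [q' e]] := closed_rootP q s1.
have q'0 : q' != 0 by apply: contraNneq q0 => h; rewrite e h mul0r.
case: (SchurX ('X - a%:P)) => [h|[h1 h2]].
  exists a => v; have := h v; rewrite evX_XsubC => /eqP; rewrite subr_eq0 => /eqP //.
apply: (IH q') => //.
  move: hs; rewrite e size_mul // ?polyXsubC_eq0 // size_XsubC addn2 /=.
  by [].
move=> u; have [w' <-] := h2 u.
by rewrite -(act_mul evX_act) -e hq.
Qed.


Lemma ev2_X v : ev2 'X v = Y v.
Proof. by rewrite /ev2 (pev_X evX_act linY). Qed.

Lemma ev2_CX v : ev2 'X%:P v = X v.
Proof. by rewrite ev2C evX_X. Qed.

Lemma ev2_scale (c : k) v : c *: v = ev2 c%:P%:P v.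
Proof. by rewrite ev2C evX_C. Qed.

Lemma B2 : (forall F : {poly {poly k}}, F != 0 ->
  (forall u, ev2 F u = 0 -> u = 0) /\ (forall u, exists w, ev2 F w = u)) -> False.
Proof.
move=> bij2.
have Hh : forall g : {poly {poly k}}, g != 0 ->
    exists2 h, h != 0 & forall b P, g ^+ b != h * P.
  move=> g g0.
  have : g`_(size g).-1 != 0 by rewrite -lead_coefE lead_coef_eq0.
  set j := (size g).-1 => gj.
  have [c hc] := exists_nonroot gj.
  exists ('X - c%:P)%:P; first by rewrite polyC_eq0 polyXsubC_eq0.
  move=> b P; apply/eqP => e.
  have m1 : map_poly (horner_eval c) (g ^+ b) = (map_poly (horner_eval c) g) ^+ b.
    by rewrite rmorphXn.
  have m2 : map_poly (horner_eval c) (('X - c%:P)%:P * P) =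
     map_poly (horner_eval c) ('X - c%:P)%:P * map_poly (horner_eval c) P.
    by rewrite rmorphM.
  have m3 : map_poly (horner_eval c) (('X - c%:P)%:P) = 0.
    by rewrite map_polyC /= /horner_eval hornerXsubC subrr.
  have := congr1 (map_poly (horner_eval c)) e.
  rewrite m1 m2 m3 mul0r.
  move/eqP; rewrite expf_eq0 => /andP[_ /eqP h0].
  have e2 : (g`_j).[c] = (map_poly (horner_eval c) g)`_j by rewrite coef_map.
  by move: hc; rewrite e2 h0 coef0 eqxx.
pose s' := undup s.
pose g : {poly {poly k}} := 'X%:P * 'X.
have g0 : g != 0 by rewrite mulf_neq0 ?polyC_eq0 ?polyX_eq0.
apply: (lemG ev2_act bij2 Hh v0 (w := w) (n := size s') (s := s') (g := g)) => //.
  exact: undup_uniq.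
move=> v; have : Good ev2 w s' g v; last by [].
elim: (hspan v) => {v}.
- move=> i hi; apply: (Good_inW ev2_act); apply: (inW_delta ev2_act).
    exact: undup_uniq.
  by rewrite mem_undup.
- apply: (Good_inW ev2_act); exact: (inW0 ev2_act).
- by move=> u v _ hu _ hv; apply: (Good_add ev2_act).
- by move=> c u _ hu; rewrite ev2_scale; apply: (Good_act ev2_act).
- by move=> u _ hu; rewrite -ev2_CX; apply: (Good_act ev2_act).
- move=> u _ hu; apply: (@Good_back _ _ _ _ ev2_act _ _ _ g 'X _ u _ hu).
  by rewrite /g (act_mul ev2_act) ev2_CX !ev2_X XY XXi.
- by move=> u _ hu; rewrite -ev2_X; apply: (Good_act ev2_act).
- move=> u _ hu; apply: (@Good_back _ _ _ _ ev2_act _ _ _ g 'X%:P _ u _ hu).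
  by rewrite /g mulrC (act_mul ev2_act) ev2_X !ev2_CX -XY YYi.
Qed.


Lemma ev2Xn t v : ev2 ('X ^+ t) v = iter t Y v.
Proof.
elim: t => [|t IH]; first by rewrite expr0 (act_one ev2_act).
by rewrite exprS (act_mul ev2_act) IH ev2_X.
Qed.

Lemma iterYYi t u : iter t Y (iter t Yi u) = u.
Proof. by elim: t => // t IH; rewrite iterSr iterS YYi. Qed.

Lemma YievX q v : Yi (evX q v) = evX q (Yi v).
Proof. by apply: comm_evX => // u; rewrite -{1}(YYi u) XY YiY. Qed.

Lemma iterYevX j q v : iter j Y (evX q v) = evX q (iter j Y v).
Proof. by elim: j => //= j ->; rewrite YevX. Qed.

Lemma B1 : (forall q : {poly k}, q != 0 ->
  (forall u, evX q u = 0 -> u = 0) /\ (forall u, exists w, evX q w = u)) ->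
  forall F : {poly {poly k}}, F != 0 -> (forall v, ev2 F v = 0) -> False.
Proof.
move=> bijX F F0 hF.
have ex : exists t, F`_t != 0 by exists (size F).-1; rewrite -lead_coefE lead_coef_eq0.
case: (ex_minnP ex) => t Ft tmin.
set D := drop_poly t F.
have eF : F = D * 'X^t.
  rewrite -{1}(poly_take_drop t F) [take_poly t F](_ : _ = 0) ?add0r //.
  apply/polyP => i; rewrite coef_take_poly coef0; case: ifP => // hi.
  by apply/eqP/negP => /negP h; move: (tmin i h); rewrite leqNgt hi.
have D0 : D`_0 = F`_t by rewrite coef_drop_poly add0n.
have hD : forall u, ev2 D u = 0.
  move=> u; rewrite -(iterYYi t u) -ev2Xn -(act_mul ev2_act) -eF; exact: hF.
have sD : (1 < size D)%N.
  rewrite ltnNge; apply/negP => h; have e := size1_polyC h.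
  have hD0 : D`_0 != 0 by rewrite D0.
  have [inj _] := bijX _ hD0.
  case: v0 => v; apply/negP; rewrite negbK; apply/eqP; apply: inj.
  by rewrite -ev2C -e hD.
set n := (size D).-1.
have sDn : size D = n.+1 by rewrite /n prednK // (ltn_trans _ sD).
have n1 : (0 < n)%N by rewrite -ltnS -sDn.
set f0 := D`_0. set fn := D`_n.
have f00 : f0 != 0 by rewrite /f0 D0.
have fn0 : fn != 0.
  rewrite /fn /n -lead_coefE lead_coef_eq0; apply: contra f00 => /eqP h.
  by rewrite /f0 h coef0.
have rel : forall u, \sum_(j < n.+1) iter j Y (evX D`_j u) = 0.
  by move=> u; rewrite -sDn; exact: hD u.
pose w1 := fun x : nat * I => iter x.1 Y (w x.2).
pose s1 := [seq (j, i) | j <- iota 0 n, i <- undup s].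
have us1 : uniq s1.
  apply: allpairs_uniq; [exact: iota_uniq | exact: undup_uniq |].
  by move=> [? ?] [? ?] _ _.
have mem1 : forall j i, (j < n)%N -> i \in s -> (j, i) \in s1.
  by move=> j i hj hi; apply: allpairs_f; rewrite ?mem_iota ?mem_undup.
have mem1' : forall j i, (j, i) \in s1 -> (j < n)%N /\ i \in s.
  move=> j i /allpairsP [[j' i'] [hj hi [-> ->]]]; move: hj hi.
  by rewrite mem_iota mem_undup.
pose W := inW evX w1 s1.
have Wd : forall j i, (j < n)%N -> i \in s -> W (iter j Y (w i)).
  by move=> j i hj hi; apply: (inW_delta evX_act w1 us1 (mem1 j i hj hi)).
have YW : forall u, W u -> W (evX fn (Y u)).
  move=> u [P ->]; rewrite (lin_sum _ _ _ linY) (lin_sum _ _ _ (act_lin evX_act fn)).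
  apply: (inW_sum evX_act) => -[j i] hx; rewrite YevX (actC' evX_act).
  apply: (inW_act evX_act); have [hj hi] := mem1' j i hx.
  rewrite /w1 /= -/(iter j.+1 Y (w i)).
  case: (ltnP j.+1 n) => hjn; first by apply: (inW_act evX_act); apply: Wd.
  have ej : j.+1 = n by apply/eqP; rewrite eqn_leq hjn hj.
  rewrite ej.
  have r := rel (w i); rewrite big_ord_recr /= in r.
  have -> : evX fn (iter n Y (w i)) = - \sum_(j' < n) evX D`_j' (iter j' Y (w i)).
    apply/eqP; rewrite -addr_eq0 addrC; apply/eqP; rewrite -[RHS]r.
    rewrite -iterYevX; congr (_ + _); apply: eq_bigr => j' _.
    by rewrite iterYevX.
  rewrite -sumrN; apply: (inW_sum evX_act) => j' _.
  rewrite -(actN evX_act); apply: (inW_act evX_act); exact: Wd.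
have YiW : forall u, W u -> W (evX f0 (Yi u)).
  move=> u [P ->]; rewrite (lin_sum _ _ _ linYi) (lin_sum _ _ _ (act_lin evX_act f0)).
  apply: (inW_sum evX_act) => -[j i] hx; rewrite YievX (actC' evX_act).
  apply: (inW_act evX_act); have [hj hi] := mem1' j i hx.
  rewrite /w1 /=.
  case: j hj hx => [|j] hj hx; last first.
    rewrite iterS YiY; apply: (inW_act evX_act); apply: Wd => //.
    exact: ltnW.
  have r := rel (w i); rewrite big_ord_recl /= in r.
  have -> : evX f0 (Yi (w i)) = - \sum_(j' < n) evX D`_j'.+1 (iter j' Y (w i)).
    apply/eqP; rewrite -addr_eq0; apply/eqP.
    have r' := congr1 Yi r; rewrite linYi.1 (lin0 linYi) in r'.
    rewrite -[RHS]r'; congr (_ + _); first by rewrite YievX.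
    rewrite (lin_sum _ _ _ linYi); apply: eq_bigr => j' _.
    by rewrite YiY add0n /bump leq0n add1n iterYevX.
  rewrite -sumrN; apply: (inW_sum evX_act) => j' _.
  rewrite -(actN evX_act); apply: (inW_act evX_act); exact: Wd.
pose g1 := 'X * f0 * fn.
have g10 : g1 != 0 by rewrite !mulf_neq0 ?polyX_eq0.
have Hh : forall g : {poly k}, g != 0 ->
    exists2 h, h != 0 & forall b P, g ^+ b != h * P.
  move=> g g0; have [c hc] := exists_nonroot g0.
  exists ('X - c%:P); first by rewrite polyXsubC_eq0.
  move=> b P; apply/eqP => e; have := congr1 (fun q => q.[c]) e.
  rewrite /= horner_exp hornerM hornerXsubC subrr mul0r => /eqP.
  by rewrite expf_eq0 (negPf hc) andbF.
apply: (lemG evX_act bijX Hh v0 (w := w1) (n := size s1) (s := s1) (g := g1)) => //.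
move=> v; have : Good evX w1 s1 g1 v; last by [].
elim: (hspan v) => {v}.
- move=> i hi; apply: (Good_inW evX_act); exact: (Wd 0%N).
- apply: (Good_inW evX_act); exact: (inW0 evX_act).
- by move=> u v _ hu _ hv; apply: (Good_add evX_act).
- by move=> c u _ hu; rewrite -evX_C; apply: (Good_act evX_act).
- by move=> u _ hu; rewrite -evX_X; apply: (Good_act evX_act).
- move=> u _ hu; apply: (@Good_back _ _ _ _ evX_act _ _ _ g1 (f0 * fn) _ u _ hu).
  by rewrite /g1 -mulrA mulrC (act_mul evX_act) evX_X XXi.
- move=> u _ [b hb]; exists b.+1.
  have -> : g1 ^+ b.+1 = ('X * f0) * (fn * g1 ^+ b) by rewrite exprS /g1; ring.
  rewrite (act_mul evX_act ('X * f0)) (act_mul evX_act fn) -YevX.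
  apply: (inW_act evX_act); exact: YW.
- move=> u _ [b hb]; exists b.+1.
  have -> : g1 ^+ b.+1 = ('X * fn) * (f0 * g1 ^+ b) by rewrite exprS /g1; ring.
  rewrite (act_mul evX_act ('X * fn)) (act_mul evX_act f0) -YievX.
  apply: (inW_act evX_act); exact: YiW.
Qed.


Lemma X_scalar : exists a, forall v, X v = a *: v.
Proof.
case: (classic (exists q : {poly k}, q != 0 /\ forall v, evX q v = 0)) => [[q [q0 hq]]|hn].
  exact: (alg_scalar (leqnn _) q0 hq).
exfalso.
have bijX : forall q : {poly k}, q != 0 ->
    (forall u, evX q u = 0 -> u = 0) /\ (forall u, exists w, evX q w = u).
  move=> q q0; case: (SchurX q) => [h|//]; exfalso; apply: hn; by exists q.
case: (classic (exists F : {poly {poly k}}, F != 0 /\ forall v, ev2 F v = 0))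
  => [[F [F0 hF]]|hnF].
  exact: (B1 bijX F0 hF).
apply: B2 => F F0; case: (Schur2 F) => [h|//]; exfalso; apply: hnF; by exists F.
Qed.

Lemma fin_dim_of_scalars a b : (forall v, X v = a *: v) -> (forall v, Y v = b *: v) ->
  finite_dim V.
Proof.
move=> hX hY.
have a0 : a != 0.
  apply/negP => /eqP a0; case: v0 => v; rewrite -(XXi v) hX a0 scale0r eqxx //.
have b0 : b != 0.
  apply/negP => /eqP b0; case: v0 => v; rewrite -(YYi v) hY b0 scale0r eqxx //.
have hXi : forall v, Xi v = a^-1 *: v.
  by move=> v; rewrite -{2}(XXi v) hX scalerA mulVf // scale1r.
have hYi : forall v, Yi v = b^-1 *: v.
  by move=> v; rewrite -{2}(YYi v) hY scalerA mulVf // scale1r.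
pose s' := undup s.
have key : forall v, exists c : I -> k, v = \sum_(i <- s') c i *: w i.
  move=> v; elim: (hspan v) => {v}.
  - move=> i hi; exists (fun j => if j == i then 1 else 0).
    rewrite (bigD1_seq i) ?mem_undup ?undup_uniq //= eqxx scale1r big1 ?addr0 //.
    by move=> j /negPf ->; rewrite scale0r.
  - by exists (fun _ => 0); rewrite big1 // => i _; rewrite scale0r.
  - move=> u v _ [c1 ->] _ [c2 ->]; exists (fun i => c1 i + c2 i).
    by rewrite -big_split; apply: eq_bigr => i _; rewrite scalerDl.
  - move=> c u _ [c1 ->]; exists (fun i => c * c1 i).
    by rewrite scaler_sumr; apply: eq_bigr => i _; rewrite scalerA.
  - move=> u _ [c1 ->]; exists (fun i => a * c1 i); rewrite hX scaler_sumr.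
    by apply: eq_bigr => i _; rewrite scalerA.
  - move=> u _ [c1 ->]; exists (fun i => a^-1 * c1 i); rewrite hXi scaler_sumr.
    by apply: eq_bigr => i _; rewrite scalerA.
  - move=> u _ [c1 ->]; exists (fun i => b * c1 i); rewrite hY scaler_sumr.
    by apply: eq_bigr => i _; rewrite scalerA.
  - move=> u _ [c1 ->]; exists (fun i => b^-1 * c1 i); rewrite hYi scaler_sumr.
    by apply: eq_bigr => i _; rewrite scalerA.
exists (size s'), (fun j => w (tnth (in_tuple s') j)) => v.
have [c ->] := key v; exists (fun j => c (tnth (in_tuple s') j)).
by rewrite big_tnth.
Qed.

End NS.

Lemma Span_swap (k : closedFieldType) (V : lmodType k) (X Xi Y Yi : V -> V)
  (I : eqType) (w : I -> V) (s : seq I) v :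
  Span X Xi Y Yi w s v -> Span Y Yi X Xi w s v.
Proof. by elim; constructor. Qed.


Lemma NS_final (k : closedFieldType) (V : lmodType k) (X Xi Y Yi : V -> V) :
  lin X -> lin Y -> lin Xi -> lin Yi ->
  (forall v, X (Xi v) = v) -> (forall v, Xi (X v) = v) ->
  (forall v, Y (Yi v) = v) -> (forall v, Yi (Y v) = v) ->
  (forall v, X (Y v) = Y (X v)) ->
  forall (G : Type) (act : G -> V -> V),
  (forall g, lin (act g)) ->
  (forall g v, X (act g v) = act g (X v)) ->
  (forall g v, Y (act g v) = act g (Y v)) ->
  (forall P : V -> V, lin P -> (forall g v, P (act g v) = act g (P v)) ->
    (forall v, P v = 0) \/ ((forall u, P u = 0 -> u = 0) /\ (forall u, exists w, P w = u))) ->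
  forall (I : eqType) (w : I -> V) (s : seq I),
  (forall v, Span X Xi Y Yi w s v) -> (exists v : V, v != 0) -> finite_dim V.
Proof.
move=> linX linY linXi linYi XXi XiX YYi YiY XY G act lin_act Xact Yact Schur I w s hs v0.
have [a ha] := X_scalar linX linY linYi XXi YYi YiY XY lin_act Xact Yact Schur hs v0.
have YX : forall v, Y (X v) = X (Y v) by move=> v; rewrite XY.
have hs' : forall v, Span Y Yi X Xi w s v by move=> v; apply: Span_swap.
have [b hb] := X_scalar linY linX linXi YYi XXi XiX YX lin_act Yact Xact Schur hs' v0.
exact: (fin_dim_of_scalars XXi YYi hs v0 ha hb).
Qed.

End PN.
Import PN.

Module PC.
Set Implicit Arguments. Unset Strict Implicit. Unset Printing Implicit Defensive.
Import Order.TTheory GRing.Theory Num.Theory.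

Section Grp.
Variable p : nat.
Hypothesis pr : prime p.
Hypothesis podd : odd p.

Lemma p_gt1 : (1 < p)%N. Proof. exact: prime_gt1. Qed.

Lemma Zpx_ext (x y : Zpx p) : (forall n, zf x n = zf y n) -> x = y.
Proof.
case: x => fx nx cx ux; case: y => fy ny cy uy /= h.
have e : fx = fy by apply: functional_extensionality.
subst fy; f_equal; apply: proof_irrelevance.
Qed.

Lemma zf_mul (x y : Zpx p) n : zf (Zpx_mul x y) n = (zf x n * zf y n) %% p ^ n.+1.
Proof. by []. Qed.

Lemma zf_one n : zf (Zpx_one p) n = 1 %% p ^ n.+1.
Proof. by []. Qed.

Lemma Zpx_mulC (x y : Zpx p) : Zpx_mul x y = Zpx_mul y x.
Proof. by apply: Zpx_ext => n; rewrite !zf_mul mulnC. Qed.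

Lemma Zpx_mulA (x y z : Zpx p) : Zpx_mul x (Zpx_mul y z) = Zpx_mul (Zpx_mul x y) z.
Proof. by apply: Zpx_ext => n; rewrite !zf_mul modnMmr modnMml mulnA. Qed.

Lemma Zpx_mul1 (x : Zpx p) : Zpx_mul x (Zpx_one p) = x.
Proof. by apply: Zpx_ext => n; rewrite zf_mul zf_one modnMmr muln1 zf_norm. Qed.

Lemma Zpx_1mul (x : Zpx p) : Zpx_mul (Zpx_one p) x = x.
Proof. by rewrite Zpx_mulC Zpx_mul1. Qed.

Local Open Scope ring_scope.

Lemma Qpx_mulC (x y : Qpx p) : Qpx_mul x y = Qpx_mul y x.
Proof. by rewrite /Qpx_mul addrC Zpx_mulC. Qed.

Lemma Qpx_mulA (x y z : Qpx p) : Qpx_mul x (Qpx_mul y z) = Qpx_mul (Qpx_mul x y) z.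
Proof. by rewrite /Qpx_mul /= addrA Zpx_mulA. Qed.

Lemma Qpx_mul1 (x : Qpx p) : Qpx_mul x (Qpx_one p) = x.
Proof. by case: x => a u; rewrite /Qpx_mul /= addr0 Zpx_mul1. Qed.

Lemma Qpx_1mul (x : Qpx p) : Qpx_mul (Qpx_one p) x = x.
Proof. by rewrite Qpx_mulC Qpx_mul1. Qed.

Lemma T_mulC (s t : T p) : T_mul s t = T_mul t s.
Proof. by rewrite /T_mul Qpx_mulC [Qpx_mul s.2 _]Qpx_mulC. Qed.

Lemma T_mulA (r s t : T p) : T_mul r (T_mul s t) = T_mul (T_mul r s) t.
Proof. by rewrite /T_mul /= !Qpx_mulA. Qed.

Lemma T_mul1 (s : T p) : T_mul s (Qpx_one p, Qpx_one p) = s.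
Proof. by case: s => a b; rewrite /T_mul /= !Qpx_mul1. Qed.

Lemma pcharp : p \in [pchar 'F_p].
Proof. exact: pchar_Fp. Qed.

Lemma omega_neq0 (x : Qpx p) : omega x != 0.
Proof.
rewrite /omega -(dvdn_pcharf pcharp) -prime_coprime // coprime_sym.
exact: zf_unit.
Qed.

Lemma omega_mul (x y : Qpx p) : omega (Qpx_mul x y) = omega x * omega y.
Proof. by rewrite /omega /Qpx_mul /= expn1 Fp_nat_mod // natrM. Qed.

Lemma omega_one : omega (Qpx_one p) = 1.
Proof. by rewrite /omega /= expn1 Fp_nat_mod. Qed.

Lemma Fp_fermat (y : 'F_p) : y != 0 -> y ^+ (p.-1) = 1.
Proof.
move=> y0; apply: (mulIf y0); rewrite mul1r -exprSr prednK ?prime_gt0 //.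
by have := expf_card y; rewrite card_Fp.
Qed.

Lemma half_pm1 : ((p - 1) %/ 2 * 2)%N = p.-1.
Proof.
rewrite divnK subn1 //; case: p podd => [|q] //= hq.
by rewrite dvdn2.
Qed.

Lemma one_neq_m1 : (1 : 'F_p) != -1.
Proof.
rewrite -subr_eq0 opprK -(natrD _ 1 1) -(dvdn_pcharf pcharp).
apply/negP => h; have hp := dvdn_leq (erefl true : (0 < 2)%N) h.
have e : p = 2%N by apply/eqP; rewrite eqn_leq hp prime_gt1.
by move: podd; rewrite e.
Qed.

Lemma sq_pow (y : 'F_p) : y != 0 -> (y ^+ 2) ^+ ((p - 1) %/ 2) = 1.
Proof. by move=> y0; rewrite -exprM mulnC half_pm1 Fp_fermat. Qed.

Lemma hilbert_even (a b : Qpx p) (m : int) :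
  vp b = (m * 2)%R -> omega b = 1 -> hilbert a b = false.
Proof.
move=> hb ob; rewrite /hilbert /hilbert_F hb ob exp1rz.
set y := (-1) ^ (vp a * m) / omega a ^ m.
have y0 : y != 0.
  by rewrite mulf_neq0 ?invr_eq0 ?expfz_neq0 ?omega_neq0 // oppr_eq0 oner_eq0.
have -> : (-1) ^ (vp a * (m * 2)) * 1 / omega a ^ (m * 2) = y ^+ 2.
  rewrite /y exprMn exprVn mulr1 mulrA -!exprz_exp.
  by rewrite -!exprnP.
by rewrite sq_pow // (negPf one_neq_m1).
Qed.

Lemma hilbert_even' (a b : Qpx p) (m : int) :
  vp a = (m * 2)%R -> omega a = 1 -> hilbert a b = false.
Proof.
move=> ha oa; rewrite /hilbert /hilbert_F ha oa exp1rz invr1 mulr1.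
set y := (-1) ^ (m * vp b) * omega b ^ m.
have y0 : y != 0.
  by rewrite mulf_neq0 ?expfz_neq0 ?omega_neq0 // oppr_eq0 oner_eq0.
have -> : (-1) ^ (m * 2 * vp b) * omega b ^ (m * 2) = y ^+ 2.
  rewrite /y exprMn mulrAC -!exprz_exp.
  by rewrite -!exprnP.
by rewrite sq_pow // (negPf one_neq_m1).
Qed.

Lemma hilbert_one_left (a b : Qpx p) : vp a = 0 -> omega a = 1 -> hilbert a b = false.
Proof. by move=> h; apply: (@hilbert_even' a b 0); rewrite h mul0r. Qed.


Definition qp (n : int) : Qpx p := (n, Zpx_one p).
Definition oneT : T p := (Qpx_one p, Qpx_one p).
Definition zXY (a b : int) : T p := (qp (a * 2), qp (b * 2)).

Lemma omega_qp n : omega (qp n) = 1.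
Proof. exact: omega_one. Qed.

Lemma qp_mul a b : Qpx_mul (qp a) (qp b) = qp (a + b).
Proof. by rewrite /Qpx_mul /qp /= Zpx_mul1. Qed.

Lemma zXY_mul a b c d : T_mul (zXY a b) (zXY c d) = zXY (a + c) (b + d).
Proof. by rewrite /T_mul /zXY /= !qp_mul !mulrDl. Qed.

Lemma zXY00 : zXY 0 0 = oneT.
Proof. by rewrite /zXY mul0r. Qed.

Lemma sigma_zXY a b c d : sigmaT (zXY a b) (zXY c d) = false.
Proof. by apply: (@hilbert_even' _ _ d); rewrite ?omega_qp. Qed.

Lemma sigma_oneT t : sigmaT t oneT = false.
Proof. by apply: hilbert_one_left => //; rewrite omega_one. Qed.

Lemma vp_mul (x y : Qpx p) : vp (Qpx_mul x y) = vp x + vp y.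
Proof. by []. Qed.

Lemma central1 (g : Ttilde p) : Tt_mul (zXY 1 0, false) g = Tt_mul g (zXY 1 0, false).
Proof.
rewrite /Tt_mul /= T_mulC; congr (_, _).
have -> : sigmaT (zXY 1 0) g.1 = false.
  apply: (@hilbert_even _ _ 1).
    by rewrite !vp_mul /= mul0r !addr0.
  by rewrite !omega_mul !omega_qp !mul1r.
have -> : sigmaT g.1 (zXY 1 0) = false.
  by apply: hilbert_one_left; rewrite /= ?mul0r // omega_qp.
by case: (g.2).
Qed.

Lemma central2 (g : Ttilde p) : Tt_mul (zXY 0 1, false) g = Tt_mul g (zXY 0 1, false).
Proof.
rewrite /Tt_mul /= T_mulC; congr (_, _).
have -> : sigmaT (zXY 0 1) g.1 = false.
  apply: (@hilbert_even _ _ 2).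
    by rewrite !vp_mul /= mul0r add0r mul1r.
  by rewrite !omega_mul !omega_qp !mul1r.
have -> : sigmaT g.1 (zXY 0 1) = false.
  by apply: (@hilbert_even' _ _ 1); rewrite /= ?omega_qp.
by case: (g.2).
Qed.

End Grp.


Section Rep.
Local Open Scope ring_scope.
Variables (p : nat) (k : closedFieldType) (V : lmodType k) (pi : Ttilde p -> {linear V -> V}).
Hypothesis pr : prime p.
Hypothesis podd : odd p.
Hypothesis hrep : is_rep pi.
Hypothesis hgen : genuine pi.

Definition op (t : T p) (v : V) : V := pi (t, false) v.

Lemma pi_mul g h v : pi (Tt_mul g h) v = pi g (pi h v).
Proof. exact: hrep.2. Qed.

Lemma op_one v : op (oneT p) v = v.
Proof. exact: hrep.1. Qed.

Lemma pi_true t v : pi (t, true) v = - op t v.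
Proof.
have e : Tt_mul (t, false) (Tt_mone p) = (t, true).
  by rewrite /Tt_mul /= -/(oneT p) T_mul1 sigma_oneT.
by rewrite -e pi_mul hgen linearN.
Qed.

Lemma pi_pm g v : pi g v = op g.1 v \/ pi g v = - op g.1 v.
Proof. by case: g => t [|]; [right; rewrite pi_true | left]. Qed.

Lemma op_mul s t v : op s (op t v) = op (T_mul s t) v \/ op s (op t v) = - op (T_mul s t) v.
Proof. by rewrite /op -pi_mul; apply: pi_pm. Qed.

Lemma op_mul_exact s t v : sigmaT s t = false -> op s (op t v) = op (T_mul s t) v.
Proof. by move=> h; rewrite /op -pi_mul /Tt_mul /= h. Qed.

Definition Xo := op (zXY p 1 0).
Definition Xio := op (zXY p (-1) 0).
Definition Yo := op (zXY p 0 1).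
Definition Yio := op (zXY p 0 (-1)).

Lemma lin_pi g : lin (pi g).
Proof. by split=> *; rewrite ?linearD ?linearZ. Qed.

Lemma lin_op t : lin (op t).
Proof. exact: lin_pi. Qed.

Lemma zXY_inv a b v : op (zXY p a b) (op (zXY p (- a) (- b)) v) = v.
Proof. by rewrite op_mul_exact ?sigma_zXY // zXY_mul !subrr zXY00 op_one. Qed.

Lemma XXi v : Xo (Xio v) = v.
Proof. by have := zXY_inv 1 0 v; rewrite oppr0. Qed.
Lemma XiX v : Xio (Xo v) = v.
Proof. by have := zXY_inv (-1) 0 v; rewrite oppr0 opprK. Qed.
Lemma YYi v : Yo (Yio v) = v.
Proof. by have := zXY_inv 0 1 v; rewrite oppr0. Qed.
Lemma YiY v : Yio (Yo v) = v.
Proof. by have := zXY_inv 0 (-1) v; rewrite oppr0 opprK. Qed.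

Lemma Xact g v : Xo (pi g v) = pi g (Xo v).
Proof. by rewrite /Xo /op -!pi_mul central1. Qed.
Lemma Yact g v : Yo (pi g v) = pi g (Yo v).
Proof. by rewrite /Yo /op -!pi_mul central2. Qed.
Lemma XY v : Xo (Yo v) = Yo (Xo v).
Proof. exact: Xact. Qed.

End Rep.

Section Dec.
Variables (p : nat) (k : closedFieldType) (V : lmodType k) (pi : Ttilde p -> {linear V -> V}).
Hypothesis pr : prime p.
Hypothesis podd : odd p.
Hypothesis hrep : is_rep pi.
Hypothesis hgen : genuine pi.

Lemma repZ_norm (x : nat) n : (x %% p ^ n.+1) %% p ^ n.+1 = x %% p ^ n.+1.
Proof. exact: modn_mod. Qed.
Lemma repZ_compat (x : nat) n : (x %% p ^ n.+2) %% p ^ n.+1 = x %% p ^ n.+1.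
Proof. by rewrite modn_dvdm // dvdn_exp2l. Qed.
Lemma repZ_unit (x : nat) : coprime x p -> coprime (x %% p ^ 1) p.
Proof. by rewrite expn1 coprime_modl. Qed.

Definition cx (x : nat) := if coprime x p then x else 1%N.
Lemma cx_coprime x : coprime (cx x) p.
Proof. by rewrite /cx; case: ifP => // _; exact: coprime1n. Qed.

Definition repZ (x : nat) : Zpx p :=
  MkZpx (repZ_norm (cx x)) (repZ_compat (cx x)) (repZ_unit (cx_coprime x)).

Lemma zf_repZ x n : coprime x p -> zf (repZ x) n = (x %% p ^ n.+1)%N.
Proof. by move=> h; rewrite /= /cx h. Qed.

Lemma repZ_mul x y : coprime x p -> coprime y p -> repZ (x * y) = Zpx_mul (repZ x) (repZ y).
Proof.
move=> hx hy; apply: Zpx_ext => n.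
by rewrite zf_mul !zf_repZ ?coprimeMl ?hx ?hy // modnMm.
Qed.

Lemma zf_mod_p (u : Zpx p) n : (zf u n %% p)%N = zf u 0.
Proof.
elim: n => [|n IH]; first by have := zf_norm u 0; rewrite expn1.
have d : (p %| p ^ n.+1)%N by rewrite dvdn_exp.
by rewrite -IH -(zf_compat u n) (modn_dvdm _ d).
Qed.

Lemma zf_coprime (u : Zpx p) n : coprime (zf u n) p.
Proof. by rewrite -coprime_modl zf_mod_p; exact: zf_unit. Qed.

Lemma P_gt1 m : (1 < p ^ m.+1)%N.
Proof. by rewrite -{1}(expn0 p) ltn_exp2l // prime_gt1. Qed.

Lemma inv_mod m (x : nat) : coprime x p -> exists r, ((x * r) %% p ^ m.+1 = 1 %% p ^ m.+1)%N.
Proof.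
move=> hx; have x0 : (0 < x)%N.
  by case: x hx => // /=; rewrite /coprime gcd0n => /eqP e; move: (prime_gt1 pr); rewrite e.
case: (egcdnP (p ^ m.+1) x0) => km kn hk _.
have g1 : gcdn x (p ^ m.+1) = 1%N by apply/eqP; exact: coprimeXr.
exists km; rewrite mulnC hk g1 modnMDl //.
Qed.

Lemma coprime_of_inv m (x r : nat) : ((x * r) %% p ^ m.+1 = 1 %% p ^ m.+1)%N ->
  coprime x p /\ coprime r p.
Proof.
move=> h.
have h1 : coprime (x * r) p.
  have d : (p %| p ^ m.+1)%N by rewrite dvdn_exp.
  rewrite -coprime_modl -(modn_dvdm _ d) h modn_dvdm //.
  by rewrite modn_small ?prime_gt1 // coprime1n.
by move: h1; rewrite coprimeMl => /andP.
Qed.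


Lemma Qpx_decomp (a : int) (u : Zpx p) (x r : nat) (n e : int) :
  a = (n * 2 + e)%R -> coprime x p -> coprime r p ->
  Qpx_mul (a, u) (0%R, repZ (x * r)) =
  Qpx_mul (Qpx_mul (qp p (n * 2)) (e, repZ x)) (0%R, Zpx_mul u (repZ r)).
Proof.
move=> ha hx hr; rewrite /Qpx_mul /qp /= ha; congr pair.
by rewrite Zpx_1mul repZ_mul // Zpx_mulA [Zpx_mul u (repZ x)]Zpx_mulC -Zpx_mulA.
Qed.

Lemma e01 (a : int) : (a %% 2)%Z \in [:: 0%R; 1%R].
Proof.
have h1 := modz_ge0 a (d := 2) isT; have h2 := ltz_pmod a (d := 2) isT.
move: h1 h2; case: (a %% 2)%Z => // n _.
by rewrite ltz_nat; case: n => [|[|n]].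
Qed.

Variables (v0 : V) (m : nat).
Hypothesis hm : forall t : T p, in_K m t.1 -> in_K m t.2 -> pi (t, false) v0 = v0.

Definition PP := (p ^ m.+1)%N.
Definition fam (i : (int * int) * (nat * nat)) : T p :=
  ((i.1.1, repZ i.2.1), (i.1.2, repZ i.2.2)).
Definition wf i := op pi (fam i) v0.
Definition sl : seq ((int * int) * (nat * nat)) :=
  [seq (e, s) | e <- [seq (a, b) | a <- [:: 0%R; 1%R], b <- [:: 0%R; 1%R]],
                s <- [seq (x, y) | x <- iota 0 PP, y <- iota 0 PP]].

Notation SpanC := (Span (Xo pi) (Xio pi) (Yo pi) (Yio pi) wf sl).

Lemma Span_pm u v : SpanC u -> v = u \/ v = (- u)%R -> SpanC v.
Proof. by move=> hu [->|->] //; rewrite -scaleN1r; apply: SpZ. Qed.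

Lemma op_mul' s t v : op pi (T_mul s t) v = op pi s (op pi t v) \/
  op pi (T_mul s t) v = (- op pi s (op pi t v))%R.
Proof.
case: (op_mul pr podd hrep hgen s t v) => h; [left | right]; by rewrite h ?opprK.
Qed.

Lemma Span_zX (n : int) u : SpanC u -> SpanC (op pi (zXY p n 0) u).
Proof.
move=> hu; case: n => n.
  elim: n => [|n IH]; first by rewrite zXY00 (op_one hrep).
  have -> : zXY p n.+1 0 = T_mul (zXY p 1 0) (zXY p n 0) by rewrite zXY_mul addr0 intS.
  apply: (Span_pm _ (op_mul' _ _ _)); exact: SpX.
elim: n => [|n IH]; first by rewrite NegzE; apply: SpXi.
have -> : zXY p (Negz n.+1) 0 = T_mul (zXY p (-1) 0) (zXY p (Negz n) 0).
  by rewrite zXY_mul addr0 !NegzE (intS n.+1) opprD.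
apply: (Span_pm _ (op_mul' _ _ _)); exact: SpXi.
Qed.

Lemma Span_zY (n : int) u : SpanC u -> SpanC (op pi (zXY p 0 n) u).
Proof.
move=> hu; case: n => n.
  elim: n => [|n IH]; first by rewrite zXY00 (op_one hrep).
  have -> : zXY p 0 n.+1 = T_mul (zXY p 0 1) (zXY p 0 n) by rewrite zXY_mul addr0 intS.
  apply: (Span_pm _ (op_mul' _ _ _)); exact: SpY.
elim: n => [|n IH]; first by rewrite NegzE; apply: SpYi.
have -> : zXY p 0 (Negz n.+1) = T_mul (zXY p 0 (-1)) (zXY p 0 (Negz n)).
  by rewrite zXY_mul addr0 !NegzE (intS n.+1) opprD.
apply: (Span_pm _ (op_mul' _ _ _)); exact: SpYi.
Qed.

Lemma Span_zXY a b u : SpanC u -> SpanC (op pi (zXY p a b) u).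
Proof.
move=> hu; have -> : zXY p a b = T_mul (zXY p a 0) (zXY p 0 b) by rewrite zXY_mul addr0 add0r.
apply: (Span_pm _ (op_mul' _ _ _)); apply: Span_zX; exact: Span_zY.
Qed.


Lemma PP_gt0 : (0 < PP)%N.
Proof. by rewrite expn_gt0 prime_gt0. Qed.

Lemma zf_lt (u : Zpx p) : (zf u m < PP)%N.
Proof. by rewrite -(zf_norm u m) ltn_pmod // PP_gt0. Qed.

Lemma Decomp_op (t : T p) : SpanC (op pi t v0).
Proof.
case: t => [[a1 u1] [a2 u2]].
set s1 := zf u1 m; set s2 := zf u2 m.
have c1 : coprime s1 p by exact: zf_coprime.
have c2 : coprime s2 p by exact: zf_coprime.
have [r1 hr1] := inv_mod m c1; have [r2 hr2] := inv_mod m c2.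
have [_ cr1] := coprime_of_inv hr1; have [_ cr2] := coprime_of_inv hr2.
pose C : T p := ((0%R, repZ (s1 * r1)), (0%R, repZ (s2 * r2))).
have hC : op pi C v0 = v0.
  apply: hm; rewrite /in_K /=.
    by rewrite /cx coprimeMl c1 cr1; apply/eqP.
  by rewrite /cx coprimeMl c2 cr2; apply/eqP.
pose e1 := (a1 %% 2)%Z; pose n1 := (a1 %/ 2)%Z.
pose e2 := (a2 %% 2)%Z; pose n2 := (a2 %/ 2)%Z.
pose i := ((e1, e2), (s1, s2)).
pose ka : T p := ((0%R, Zpx_mul u1 (repZ r1)), (0%R, Zpx_mul u2 (repZ r2))).
have hka : op pi ka v0 = v0.
  apply: hm; rewrite /in_K /= /cx.
    by rewrite cr1 modnMmr -/s1; apply/eqP.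
  by rewrite cr2 modnMmr -/s2; apply/eqP.
have eT : T_mul ((a1, u1), (a2, u2)) C = T_mul (T_mul (zXY p n1 n2) (fam i)) ka.
  rewrite /T_mul /C /ka /zXY /fam /=; congr pair; apply: Qpx_decomp => //; exact: divz_eq.
have iS : i \in sl.
  apply: allpairs_f; first by apply: allpairs_f; apply: e01.
  by apply: allpairs_f; rewrite mem_iota add0n zf_lt.
rewrite -hC; apply: (Span_pm _ (op_mul pr podd hrep hgen _ _ _)).
rewrite eT; apply: (Span_pm _ (op_mul' _ _ _)); rewrite hka.
apply: (Span_pm _ (op_mul' _ _ _)); apply: Span_zXY; exact: Sp_base.
Qed.

Lemma Decomp h : SpanC (pi h v0).
Proof.
apply: (Span_pm (Decomp_op h.1)); exact: (pi_pm pr podd hrep hgen).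
Qed.

End Dec.

End PC.
Import PC.

Unset Implicit Arguments.
Import GRing.Theory.
Local Open Scope ring_scope.

Theorem lemma4p13 (p : nat) (k : closedFieldType) (V : lmodType k)
  (pi : Ttilde p -> {linear V -> V}) :
  prime p -> odd p -> p \in [pchar k] ->
  is_rep pi -> genuine pi -> smooth pi -> irreducible pi ->
  finite_dim V.
Proof.
move=> pr podd _ hrep hgen hsm [[v0 v00] hirr].
have [m hm] := hsm v0.
have Schur : forall P : V -> V, lin P -> (forall g v, P (pi g v) = pi g (P v)) ->
    (forall v, P v = 0) \/ ((forall u, P u = 0 -> u = 0) /\ (forall u, exists w, P w = u)).
  move=> P hP hPg.
  case: (hirr (fun v => P v = 0)).
  - split.
    + exact: lin0 hP.
    + by move=> u w hu hw; rewrite hP.1 hu hw addr0.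
    + by move=> a u hu; rewrite hP.2 hu scaler0.
    + by move=> g u hu; rewrite hPg hu linear0.
  - by move=> h; left.
  move=> hker.
  case: (hirr (fun v => exists u, v = P u)).
  - split.
    + by exists 0; rewrite (lin0 hP).
    + by move=> u w [u' ->] [w' ->]; exists (u' + w'); rewrite hP.1.
    + by move=> a u [u' ->]; exists (a *: u'); rewrite hP.2.
    + by move=> g u [u' ->]; exists (pi g u'); rewrite hPg.
  - move=> hs; right; split => // u; have [w' ->] := hs u; by exists w'.
  by move=> h; left => v; apply: h; exists v.
have XiAct : forall g v, Xio pi (pi g v) = pi g (Xio pi v).
  move=> g v; rewrite -{1}(XXi pr podd hrep v) -(Xact pr podd hrep).
  by rewrite (XiX pr podd hrep).
have YiAct : forall g v, Yio pi (pi g v) = pi g (Yio pi v).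
  move=> g v; rewrite -{1}(YYi pr podd hrep v) -(Yact pr podd hrep).
  by rewrite (YiY pr podd hrep).
have Span_pi : forall g u, Span (Xo pi) (Xio pi) (Yo pi) (Yio pi) (wf pi v0) (sl p m) u ->
    Span (Xo pi) (Xio pi) (Yo pi) (Yio pi) (wf pi v0) (sl p m) (pi g u).
  move=> g u; elim => {u}.
  - move=> i _.
    have -> : pi g (wf pi v0 i) = pi (Tt_mul g (fam p i, false)) v0 by rewrite (pi_mul hrep).
    exact: (Decomp pr podd hrep hgen hm).
  - by rewrite linear0; exact: Sp0.
  - by move=> u w _ hu _ hw; rewrite linearD; apply: SpD.
  - by move=> a u _ hu; rewrite linearZ; apply: SpZ.
  - by move=> u _ hu; rewrite -(Xact pr podd hrep); apply: SpX.
  - by move=> u _ hu; rewrite -XiAct; apply: SpXi.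
  - by move=> u _ hu; rewrite -(Yact pr podd hrep); apply: SpY.
  - by move=> u _ hu; rewrite -YiAct; apply: SpYi.
have hspan : forall v, Span (Xo pi) (Xio pi) (Yo pi) (Yio pi) (wf pi v0) (sl p m) v.
  case: (hirr (Span (Xo pi) (Xio pi) (Yo pi) (Yio pi) (wf pi v0) (sl p m))) => //.
    split; [exact: Sp0 | exact: SpD | exact: SpZ | exact: Span_pi].
  move=> h; exfalso; move: v00; rewrite (h v0) ?eqxx //.
  by have := Decomp pr podd hrep hgen hm (Tt_one p); rewrite hrep.1.
apply: (@NS_final k V (Xo pi) (Xio pi) (Yo pi) (Yio pi) (lin_op _ _) (lin_op _ _)
   (lin_op _ _) (lin_op _ _) (XXi pr podd hrep) (XiX pr podd hrep) (YYi pr podd hrep)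
   (YiY pr podd hrep) (XY pr podd hrep) _ (fun g => pi g) (lin_pi pi)
   (Xact pr podd hrep) (Yact pr podd hrep) Schur _ _ _ hspan).
by exists v0.
Qed.
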